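(* Let $s>-1/2$. Then for every $t\in\mathbb{R}$ the bilinear operator $B_2$ defined in the context maps $\dot H^s\times\dot H^s$ into $\dot H^{s+1}$ and satisfies $$\|B_2(u,v)\|_{\dot H^{s+1}}\le c_2(s+1)\|u\|_{\dot H^s}\|v\|_{\dot H^s},$$ with a constant $c_2(s+1)$ depending only on $s$.
   Context: Write $\mathbb{Z}_0=\mathbb{Z}\setminus\{0\}$. For $s\in\mathbb{R}$, $\dot H^s$ denotes the Hilbert space of complex sequences $v=(v_k)_{k\in\mathbb{Z}_0}$ with $\|v\|_{\dot H^s}^2=\sum_{k\in\mathbb{Z}_0}|k|^{2s}|v_k|^2<\infty$. For $t\in\mathbb{R}$, $$B_2(u,v)_k=\sum_{k_1+k_2=k,\ k_1,k_2\in\mathbb{Z}_0}\frac{e^{3ikk_1k_2t}u_{k_1}v_{k_2}}{k_1k_2},\qquad k\in\mathbb{Z}_0.$$ *)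

(* Defs.v *)
From Stdlib Require Import Reals ZArith.
From Coquelicot Require Import Coquelicot.
Open Scope R_scope.

(* Complex sequences indexed by Z_0 = Z \ {0} are modelled as functions
   Z -> C whose value at 0 is ignored. A sum over Z_0 is the series over
   n : nat of f(n+1) + f(-(n+1)). *)
Definition zterm {V : AbelianMonoid} (f : Z -> V) (n : nat) : V :=
  plus (f (Z.of_nat (S n))) (f (- Z.of_nat (S n))%Z).

Definition Hs_weight (s : R) (v : Z -> C) (k : Z) : R :=
  Rpower (IZR (Z.abs k)) (2 * s) * (Cmod (v k)) ^ 2.

Definition in_Hs (s : R) (v : Z -> C) : Prop :=
  ex_series (zterm (Hs_weight s v)).

Definition Hs_norm (s : R) (v : Z -> C) : R :=
  sqrt (Series (zterm (Hs_weight s v))).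

(* summand of B_2(u,v)_k at index k1 (with k2 = k - k1);
   zero when k1 = 0 or k2 = 0, i.e. the sum runs over k1, k2 in Z_0 *)
Definition B2_term (t : R) (u v : Z -> C) (k k1 : Z) : C :=
  let k2 := (k - k1)%Z in
  if orb (Z.eqb k1 0) (Z.eqb k2 0) then RtoC 0 else
  let theta := 3 * IZR k * IZR k1 * IZR k2 * t in
  Cdiv (Cmult (Cmult (cos theta, sin theta) (u k1)) (v k2))
       (RtoC (IZR k1 * IZR k2)).

Definition B2 (t : R) (u v : Z -> C) (k : Z) : C :=
  (Series (zterm (fun k1 => Re (B2_term t u v k k1))),
   Series (zterm (fun k1 => Im (B2_term t u v k k1)))).

(* Main.v *)
Require Import Defs.
From Stdlib Require Import Reals ZArith.
From Coquelicot Require Import Coquelicot.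
From Stdlib Require Import Lra Lia.
Open Scope R_scope.

Fixpoint zs (f : Z -> R) (a : Z) (n : nat) : R :=
  match n with O => 0 | S n => f a + zs f (a + 1)%Z n end.

Lemma zs_ext f g a n : (forall i, f i = g i) -> zs f a n = zs g a n.
Proof. intros H; revert a; induction n; intros a; simpl; [reflexivity|]. rewrite H, IHn; reflexivity. Qed.

Lemma zs_plus f g a n : zs (fun i => f i + g i) a n = zs f a n + zs g a n.
Proof. revert a; induction n; intros a; simpl; [lra|]. rewrite IHn; lra. Qed.

Lemma zs_scal c f a n : zs (fun i => c * f i) a n = c * zs f a n.
Proof. revert a; induction n; intros a; simpl; [lra|]. rewrite IHn; lra. Qed.

Lemma zs_nonneg f a n : (forall i, 0 <= f i) -> 0 <= zs f a n.
Proof. intros H; revert a; induction n; intros a; simpl; [lra|]. specialize (IHn (a+1)%Z). specialize (H a). lra. Qed.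

Lemma zs_le f g a n : (forall i, f i <= g i) -> zs f a n <= zs g a n.
Proof. intros H; revert a; induction n; intros a; simpl; [lra|]. specialize (IHn (a+1)%Z). specialize (H a). lra. Qed.

Lemma zs_split f a n m : zs f a (n + m) = zs f a n + zs f (a + Z.of_nat n)%Z m.
Proof. revert a; induction n; intros a; simpl.
 - replace (a + 0)%Z with a by lia; lra.
 - rewrite IHn. replace (a + 1 + Z.of_nat n)%Z with (a + Z.pos (Pos.of_succ_nat n))%Z by lia. lra.
Qed.

Lemma zs_last f a n : zs f a (S n) = zs f a n + f (a + Z.of_nat n)%Z.
Proof. replace (S n) with (n + 1)%nat by lia. rewrite zs_split. simpl. lra. Qed.

Lemma zs_shift f c a n : zs (fun i => f (i + c)%Z) a n = zs f (a + c)%Z n.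
Proof. revert a; induction n; intros a; simpl; [reflexivity|]. rewrite IHn.
 replace (a + 1 + c)%Z with (a + c + 1)%Z by lia. reflexivity. Qed.

Lemma zs_rev f a n : zs (fun i => f (- i)%Z) a n = zs f (- (a + Z.of_nat n) + 1)%Z n.
Proof. revert a; induction n; intros a; [reflexivity|].
 simpl zs at 1. rewrite IHn. rewrite zs_last.
 replace (- (a + 1 + Z.of_nat n) + 1)%Z with (- (a + Z.of_nat (S n)) + 1)%Z by lia.
 replace (- (a + Z.of_nat (S n)) + 1 + Z.of_nat n)%Z with (- a)%Z by lia. lra.
Qed.

Lemma zs_mono f a n a' n' : (forall i, 0 <= f i) -> (a <= a')%Z -> (a' + Z.of_nat n' <= a + Z.of_nat n)%Z ->
  zs f a' n' <= zs f a n.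
Proof. intros H H1 H2.
 set (d1 := Z.to_nat (a' - a)). set (d2 := (n - (d1 + n'))%nat).
 assert (E : n = (d1 + (n' + d2))%nat) by (unfold d2, d1; lia).
 rewrite E, zs_split, zs_split.
 replace (a + Z.of_nat d1)%Z with a' by (unfold d1; lia).
 pose proof (zs_nonneg f a d1 H). pose proof (zs_nonneg f (a' + Z.of_nat n')%Z d2 H). lra.
Qed.

Lemma zs_swap (F : Z -> Z -> R) a n b m :
  zs (fun i => zs (F i) b m) a n = zs (fun j => zs (fun i => F i j) a n) b m.
Proof. revert a; induction n; intros a; simpl.
 - clear. revert b; induction m; intros b; simpl; [reflexivity|]. rewrite <- IHm; lra.
 - rewrite IHn. rewrite <- zs_plus. reflexivity.
Qed.

Lemma quad F S G : 0 <= G -> (forall t, 0 <= F - 2*t*S + t*t*G) -> S*S <= F*G.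
Proof. intros HG H. destruct (Req_dec G 0) as [E|E].
 - subst G. destruct (Req_dec S 0) as [E|E]; [subst; specialize (H 0); nra|].
   specialize (H ((F+1)/(2*S))). exfalso.
   replace (F - 2 * ((F + 1) / (2 * S)) * S + (F + 1) / (2 * S) * ((F + 1) / (2 * S)) * 0) with (-1) in H by (field; auto). lra.
 - specialize (H (S/G)).
   replace (F - 2 * (S / G) * S + S / G * (S / G) * G) with ((F*G - S*S)/G) in H by (field; auto).
   assert (0 < G) by lra.
   apply Rmult_le_compat_r with (r:=G) in H; [|lra].
   unfold Rdiv in H. rewrite Rmult_assoc, Rinv_l in H by lra. lra.
Qed.

Lemma cs_weighted p q a n : (forall i, 0 <= q i) ->
  (zs (fun i => p i * q i) a n)^2 <= zs (fun i => q i * (p i)^2) a n * zs q a n.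
Proof. intros Hq. rewrite <- Rsqr_pow2; unfold Rsqr. apply quad. apply zs_nonneg; auto.
 intros t. transitivity (zs (fun i => q i * (p i - t)^2) a n).
 - apply zs_nonneg. intros i. apply Rmult_le_pos; [auto|apply pow2_ge_0].
 - right. rewrite (zs_ext (fun i => q i * (p i - t)^2)
      (fun i => (q i * (p i)^2 + (-2*t) * (p i * q i)) + (t*t) * q i)) by (intros; ring).
   rewrite !zs_plus. rewrite (zs_scal (-2*t) (fun i => p i * q i)), (zs_scal (t*t) q). ring.
Qed.

Lemma cs_std f g a n :
  (zs (fun i => f i * g i) a n)^2 <= zs (fun i => (f i)^2) a n * zs (fun i => (g i)^2) a n.
Proof. rewrite <- Rsqr_pow2; unfold Rsqr. apply quad. apply zs_nonneg; intros; nra.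
 intros t. transitivity (zs (fun i => (f i - t * g i)^2) a n).
 - apply zs_nonneg. intros i. apply pow2_ge_0.
 - right. rewrite (zs_ext (fun i => (f i - t * g i)^2)
      (fun i => ((f i)^2 + (-2*t) * (f i * g i)) + (t*t) * (g i)^2)) by (intros; ring).
   rewrite !zs_plus. rewrite (zs_scal (-2*t) (fun i => f i * g i)), (zs_scal (t*t) (fun i => g i ^ 2)). ring.
Qed.

Lemma zs_lim (F : nat -> Z -> R) (G : Z -> R) a n : (forall k, is_lim_seq (fun M => F M k) (G k)) ->
  is_lim_seq (fun M => zs (F M) a n) (zs G a n).
Proof. intros H; revert a; induction n; intros a; simpl.
 - apply is_lim_seq_const.
 - apply is_lim_seq_plus'; [apply H | apply IHn].
Qed.

Definition Tz (N : nat) (f : Z -> R) := zs f (- Z.of_nat N)%Z (2 * N + 1).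

Lemma zterm_R (f : Z -> R) n : zterm f n = f (Z.of_nat (S n)) + f (- Z.of_nat (S n))%Z.
Proof. reflexivity. Qed.

Lemma Tz0 f : Tz 0 f = f 0%Z.
Proof. unfold Tz; simpl. lra. Qed.

Lemma TzS f N : Tz (S N) f = Tz N f + f (Z.of_nat (S N)) + f (- Z.of_nat (S N))%Z.
Proof. unfold Tz. replace (2 * S N + 1)%nat with (S (S (2 * N + 1))) by lia.
 rewrite zs_last. change (zs f (- Z.of_nat (S N)) (S (2 * N + 1))) with (f (- Z.of_nat (S N))%Z + zs f (- Z.of_nat (S N) + 1)%Z (2 * N + 1)).
 replace (- Z.of_nat (S N) + 1)%Z with (- Z.of_nat N)%Z by lia.
 replace (- Z.of_nat (S N) + Z.of_nat (S (2 * N + 1)))%Z with (Z.of_nat (S N)) by lia. lra.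
Qed.

Lemma sum_SnR (a : nat -> R) n : sum_n a (S n) = sum_n a n + a (S n).
Proof. exact (sum_Sn a n). Qed.

Lemma sum_T g n : g 0%Z = 0 -> sum_n (zterm g) n = Tz (S n) g.
Proof. intros H0. induction n.
 - rewrite sum_O, TzS, Tz0, zterm_R, H0. lra.
 - rewrite sum_SnR, IHn, (TzS g (S n)), zterm_R. lra.
Qed.

Lemma sum_n_nonneg (a : nat -> R) n : (forall k, 0 <= a k) -> 0 <= sum_n a n.
Proof. intros H. induction n; [rewrite sum_O; auto| rewrite sum_SnR; specialize (H (S n)); simpl; lra]. Qed.

Lemma sum_le_Series (a : nat -> R) n : (forall k, 0 <= a k) -> ex_series a -> sum_n a n <= Series a.
Proof. intros H Hex. pose proof (Series_correct a Hex) as Hc.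
 assert (Hl : is_lim_seq (sum_n a) (Series a)) by exact Hc.
 assert (Hinc : forall m, sum_n a n <= sum_n a (n + m)%nat).
 { intros m; induction m. rewrite Nat.add_0_r; lra. rewrite Nat.add_succ_r, sum_SnR. specialize (H (S (n+m))). simpl; lra. }
 assert (Hl2 : is_lim_seq (fun m => sum_n a (n + m)%nat) (Series a)).
 { apply (is_lim_seq_incr_n (sum_n a) n) in Hl. eapply is_lim_seq_ext; [|exact Hl]. intros; rewrite Nat.add_comm; reflexivity. }
 pose proof (is_lim_seq_le (fun _ => sum_n a n) (fun m => sum_n a (n+m)%nat) (sum_n a n) (Series a) Hinc (is_lim_seq_const _) Hl2). simpl in H0. exact H0.
Qed.

Lemma T_le_Series g N : (forall k, 0 <= g k) -> g 0%Z = 0 -> ex_series (zterm g) -> Tz N g <= Series (zterm g).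
Proof. intros H H0 Hex. assert (Hz : forall k, 0 <= zterm g k) by (intros; rewrite zterm_R; pose proof (H (Z.of_nat (S k))); pose proof (H (- Z.of_nat (S k))%Z); lra).
 destruct N.
 - rewrite Tz0, H0. transitivity (sum_n (zterm g) 0). apply sum_n_nonneg; auto. apply sum_le_Series; auto.
 - rewrite <- sum_T by auto. apply sum_le_Series; auto.
Qed.

Lemma zs_le_Series g a n : (forall k, 0 <= g k) -> g 0%Z = 0 -> ex_series (zterm g) -> zs g a n <= Series (zterm g).
Proof. intros H H0 Hex. set (N := (Z.to_nat (Z.abs a) + n)%nat).
 transitivity (Tz N g); [|apply T_le_Series; auto].
 unfold Tz. apply zs_mono; auto; unfold N; lia.
Qed.

Lemma lim_T g : g 0%Z = 0 -> ex_series (zterm g) -> is_lim_seq (fun N => Tz (S N) g) (Series (zterm g)).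
Proof. intros H0 Hex. pose proof (Series_correct _ Hex) as Hc.
 assert (Hl : is_lim_seq (sum_n (zterm g)) (Series (zterm g))) by exact Hc.
 eapply is_lim_seq_ext; [|exact Hl]. intros; apply sum_T; auto.
Qed.

Lemma ex_from_T g B : (forall k, 0 <= g k) -> g 0%Z = 0 -> (forall N, Tz N g <= B) ->
  ex_series (zterm g) /\ Series (zterm g) <= B.
Proof. intros H H0 HB.
 assert (Hex : ex_series (zterm g)).
 { destruct (ex_finite_lim_seq_incr (sum_n (zterm g)) B) as [l Hl].
   - intros n. rewrite sum_SnR, zterm_R. pose proof (H (Z.of_nat (S (S n)))); pose proof (H (- Z.of_nat (S (S n)))%Z). simpl in *. lra.
   - intros n; rewrite sum_T; auto.
   - exists l. exact Hl. }
 split; auto. pose proof (lim_T g H0 Hex) as Hl.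
 pose proof (is_lim_seq_le _ _ _ _ (fun N => HB (S N)) Hl (is_lim_seq_const B)). simpl in H1. exact H1.
Qed.

Lemma ex_from_T2 g B : (forall k, 0 <= g k) -> g 0%Z = 0 -> (forall N, (Tz N g)^2 <= B) ->
  ex_series (zterm g) /\ (Series (zterm g))^2 <= B.
Proof. intros H H0 HB.
 assert (HB0 : 0 <= B) by (specialize (HB 0%nat); pose proof (pow2_ge_0 (Tz 0 g)); lra).
 destruct (ex_from_T g (1 + B) H H0) as [Hex _].
 { intros N. specialize (HB N). pose proof (zs_nonneg g (- Z.of_nat N)%Z (2*N+1) H). unfold Tz in *. nra. }
 split; auto. pose proof (lim_T g H0 Hex) as Hl.
 pose proof (is_lim_seq_mult' _ _ _ _ Hl Hl) as Hl2.
 assert (HB' : forall N, Tz (S N) g * Tz (S N) g <= B) by (intros N; specialize (HB (S N)); simpl in HB; lra).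
 pose proof (is_lim_seq_le _ _ _ _ HB' Hl2 (is_lim_seq_const B)).
 simpl in H1. simpl. lra.
Qed.

Lemma Rpower_pos x y : 0 < Rpower x y.
Proof. unfold Rpower. apply exp_pos. Qed.

Lemma ln_le_pred x : 0 < x -> ln x <= x - 1.
Proof. intros H. pose proof (exp_ineq1_le (ln x)). rewrite exp_ln in H0 by auto. lra. Qed.

Lemma pstep q m : 0 < q -> 2 <= m ->
  Rpower m (-(q+1)) <= (Rpower (m-1) (-q) - Rpower m (-q)) / q.
Proof. intros Hq Hm. unfold Rpower.
 set (L := ln m). set (L' := ln (m-1)).
 assert (HLL : 1/m <= L - L').
 { assert (E : L' - L = ln ((m-1)/m)) by (unfold L, L'; rewrite ln_div by lra; ring).
   pose proof (ln_le_pred ((m-1)/m)). assert (0 < (m-1)/m) by (apply Rdiv_lt_0_compat; lra).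
   specialize (H H0). replace ((m-1)/m - 1) with (-(1/m)) in H by (field; lra). lra. }
 assert (E1 : exp (- (q + 1) * L) = exp (-q * L) / m).
 { replace (- (q + 1) * L) with (-q*L + - L) by ring. rewrite exp_plus, exp_Ropp.
   unfold L; rewrite exp_ln by lra. field; lra. }
 assert (E2 : exp (-q * L') = exp (-q * L) * exp (q * (L - L'))).
 { rewrite <- exp_plus. f_equal; ring. }
 pose proof (exp_ineq1_le (q * (L - L'))). pose proof (exp_pos (-q*L)).
 rewrite E1, E2. apply Rmult_le_reg_r with q; auto.
 replace ((exp (- q * L) * exp (q * (L - L')) - exp (- q * L)) / q * q)
   with (exp (- q * L) * (exp (q * (L - L')) - 1)) by (field; lra).
 assert (exp (-q*L) / m * q = exp (-q*L) * (q * (1/m))) by (field; lra). rewrite H1.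
 apply Rmult_le_compat_l; [lra|]. nra.
Qed.

Lemma Rpower_one y : Rpower 1 y = 1.
Proof. unfold Rpower. rewrite ln_1, Rmult_0_r, exp_0. reflexivity. Qed.

Lemma sum_SnR' (a : nat -> R) n : sum_n a (S n) = sum_n a n + a (S n).
Proof. exact (sum_Sn a n). Qed.

Lemma pseries_bound q : 0 < q -> forall N,
  sum_n (fun n => Rpower (INR (S n)) (-(q+1))) N <= 1 + (1 - Rpower (INR (S N)) (-q)) / q.
Proof. intros Hq N. induction N.
 - rewrite sum_O. replace (INR 1) with 1 by reflexivity. rewrite !Rpower_one. lra.
 - rewrite (sum_SnR' (fun n => Rpower (INR (S n)) (-(q+1))) N).
   pose proof (pstep q (INR (S (S N))) Hq).
   replace (INR (S (S N)) - 1) with (INR (S N)) in H by (rewrite !S_INR; ring).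
   assert (2 <= INR (S (S N))) by (rewrite !S_INR; pose proof (pos_INR N); lra).
   specialize (H H0).
   assert (1 + (1 - Rpower (INR (S N)) (-q)) / q + (Rpower (INR (S N)) (- q) - Rpower (INR (S (S N))) (- q)) / q
     = 1 + (1 - Rpower (INR (S (S N))) (- q)) / q) by (field; lra). lra.
Qed.

Definition absZ (k : Z) : R := IZR (Z.abs k).
Definition Xf (u : Z -> C) (k : Z) : R := if Z.eqb k 0 then 0 else Cmod (u k) / absZ k.
Definition pw (r : R) (k : Z) : R := if Z.eqb k 0 then 0 else Rpower (absZ k) r.
Definition af (r : R) (u : Z -> C) (k : Z) : R := pw r k * Xf u k.

Lemma absZ_pos k : k <> 0%Z -> 0 < absZ k.
Proof. intros H. unfold absZ. apply IZR_lt. lia. Qed.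

Lemma Xf_nonneg u k : 0 <= Xf u k.
Proof. unfold Xf. destruct (Z.eqb_spec k 0); [lra|]. pose proof (absZ_pos k n).
 apply Rdiv_le_0_compat; [apply Cmod_ge_0|lra]. Qed.

Lemma Xf_0 u : Xf u 0%Z = 0.
Proof. reflexivity. Qed.

Lemma pw_nonneg r k : 0 <= pw r k.
Proof. unfold pw. destruct (Z.eqb k 0); [lra|]. left; apply Rpower_pos. Qed.

Lemma pw_0 r : pw r 0%Z = 0.
Proof. reflexivity. Qed.

Lemma af_nonneg r u k : 0 <= af r u k.
Proof. unfold af. apply Rmult_le_pos; [apply pw_nonneg|apply Xf_nonneg]. Qed.

Lemma af_0 r u : af r u 0%Z = 0.
Proof. unfold af. rewrite pw_0. lra. Qed.

Lemma RtoC_nz x : x <> 0 -> RtoC x <> 0%C.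
Proof. intros H E. apply H. apply (f_equal fst) in E. exact E. Qed.

Lemma Cmod_cis x : Cmod (cos x, sin x) = 1.
Proof. unfold Cmod. cbn [fst snd]. replace (cos x ^ 2 + sin x ^ 2) with 1 by (rewrite <- (sin2_cos2 x); unfold Rsqr; ring). apply sqrt_1. Qed.

Lemma term_cmod t u v k j : Cmod (B2_term t u v k j) = Xf u j * Xf v (k - j).
Proof. unfold B2_term, Xf. destruct (Z.eqb_spec j 0) as [E|E]; simpl.
 - rewrite Cmod_0. lra.
 - destruct (Z.eqb_spec (k - j) 0) as [E2|E2]; simpl.
   + rewrite Cmod_0. lra.
   + pose proof (absZ_pos j E). pose proof (absZ_pos (k-j) E2).
     rewrite Cmod_div.
     2:{ apply RtoC_nz. apply Rmult_integral_contrapositive_currified; apply not_0_IZR; auto. }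
     rewrite !Cmod_mult, Cmod_R, Rabs_mult, <- !abs_IZR.
     rewrite Cmod_cis.
     rewrite Rmult_1_l. unfold absZ. field. split; unfold absZ in *; lra.
Qed.

Lemma weight_eq s u j : j <> 0%Z -> Hs_weight s u j = (af (s+1) u j)^2.
Proof. intros H. unfold Hs_weight, af, pw, Xf. destruct (Z.eqb_spec j 0); [contradiction|].
 pose proof (absZ_pos j H). fold (absZ j).
 replace (2 * s) with (s + s) by ring. rewrite !Rpower_plus, Rpower_1 by auto.
 field. lra.
Qed.

Lemma zterm_weight s u n : zterm (Hs_weight s u) n = zterm (fun j => (af (s+1) u j)^2) n.
Proof. rewrite !zterm_R. rewrite !weight_eq by lia. reflexivity. Qed.

Lemma Xf_aw r u j : Xf u j = af r u j * pw (-r) j.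
Proof. unfold af, pw. destruct (Z.eqb_spec j 0) as [E|E]; [subst; rewrite Xf_0; ring|].
 rewrite Rpower_Ropp. pose proof (Rpower_pos (absZ j) r). field. lra. Qed.

Lemma pw_ineq r u v k j : 0 < r -> k <> 0%Z ->
  pw r k * (Xf u j * Xf v (k - j)) <=
  Rpower 2 r * (af r u j * Xf v (k - j) + Xf u j * af r v (k - j)).
Proof. intros Hr Hk. unfold af.
 destruct (Z.eqb_spec j 0) as [E|E]; [subst; rewrite Xf_0, pw_0; lra|].
 destruct (Z.eqb_spec (k - j) 0) as [E2|E2]; [rewrite E2, Xf_0, pw_0; lra|].
 pose proof (Xf_nonneg u j). pose proof (Xf_nonneg v (k-j)).
 assert (HP : pw r k <= Rpower 2 r * (pw r j + pw r (k - j))).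
 { unfold pw. destruct (Z.eqb_spec k 0); [contradiction|]. destruct (Z.eqb_spec j 0); [contradiction|].
   destruct (Z.eqb_spec (k-j) 0); [contradiction|].
   pose proof (absZ_pos k Hk). pose proof (absZ_pos j E). pose proof (absZ_pos (k-j) E2).
   assert (Htri : absZ k <= absZ j + absZ (k - j)) by (unfold absZ; rewrite <- plus_IZR; apply IZR_le; lia).
   pose proof (Rpower_pos (absZ j) r). pose proof (Rpower_pos (absZ (k-j)) r).
   destruct (Rle_dec (absZ j) (absZ (k-j))).
   - assert (HH : Rpower (absZ k) r <= Rpower (2 * absZ (k - j)) r) by (apply Rle_Rpower_l; lra).
     rewrite <- Rpower_mult_distr in HH by lra. pose proof (Rpower_pos 2 r). nra.
   - assert (HH : Rpower (absZ k) r <= Rpower (2 * absZ j) r) by (apply Rle_Rpower_l; lra).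
     rewrite <- Rpower_mult_distr in HH by lra. pose proof (Rpower_pos 2 r). nra. }
 assert (0 <= Xf u j * Xf v (k - j)) by nra.
 apply Rmult_le_compat_r with (r := Xf u j * Xf v (k - j)) in HP; auto. nra.
Qed.

Lemma T_rev_le h k M : (forall i, 0 <= h i) -> h 0%Z = 0 -> ex_series (zterm h) ->
  Tz M (fun j => h (k - j)%Z) <= Series (zterm h).
Proof. intros H0 H1 H2. unfold Tz.
 rewrite (zs_ext _ (fun j => (fun i => h (i + k)%Z) (- j)%Z)) by (intros; f_equal; lia).
 rewrite (zs_rev (fun i => h (i + k)%Z)), zs_shift. apply zs_le_Series; auto. Qed.

Lemma T_shift_le h j N : (forall i, 0 <= h i) -> h 0%Z = 0 -> ex_series (zterm h) ->
  Tz N (fun k => h (k - j)%Z) <= Series (zterm h).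
Proof. intros H0 H1 H2. unfold Tz.
 rewrite (zs_ext _ (fun k => h (k + - j)%Z)) by (intros; f_equal; lia).
 rewrite zs_shift. apply zs_le_Series; auto. Qed.

Lemma T_nonneg f N : (forall i, 0 <= f i) -> 0 <= Tz N f.
Proof. intros; apply zs_nonneg; auto. Qed.

Lemma T_swap (F : Z -> Z -> R) N M :
  Tz N (fun k => Tz M (F k)) = Tz M (fun j => Tz N (fun k => F k j)).
Proof. unfold Tz. apply zs_swap. Qed.

Lemma absZ_S n : absZ (Z.of_nat (S n)) = INR (S n).
Proof. unfold absZ. rewrite Z.abs_eq by lia. rewrite INR_IZR_INZ. reflexivity. Qed.

Lemma absZ_mS n : absZ (- Z.of_nat (S n))%Z = INR (S n).
Proof. unfold absZ. rewrite Z.abs_opp, Z.abs_eq by lia. rewrite INR_IZR_INZ. reflexivity. Qed.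

Definition ZW (r : R) := 2 * (1 + 1 / (2 * r - 1)).

Lemma Tw2 r M : 1/2 < r -> Tz M (fun j => (pw (-r) j)^2) <= ZW r.
Proof. intros Hr. set (q := 2 * r - 1). assert (Hq : 0 < q) by (unfold q; lra).
 assert (HZ : 0 <= ZW r) by (unfold ZW; fold q; assert (0 < 1/q) by (apply Rdiv_lt_0_compat; lra); lra).
 destruct M. { rewrite Tz0. unfold pw; simpl. lra. }
 rewrite <- sum_T by (unfold pw; simpl; ring).
 assert (HE : forall n, @eq R (zterm (fun j => (pw (-r) j)^2) n) (2 * Rpower (INR (S n)) (-(q+1)))).
 { intros n. rewrite zterm_R. unfold pw.
   destruct (Z.eqb_spec (Z.of_nat (S n)) 0); [lia|]. destruct (Z.eqb_spec (- Z.of_nat (S n))%Z 0); [lia|].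
   rewrite absZ_S, absZ_mS. assert (HEq : -(q+1) = -r + -r) by (unfold q; ring). rewrite HEq, Rpower_plus. ring. }
 assert (HE2 : forall N, @eq R (sum_n (zterm (fun j => (pw (-r) j)^2)) N) (2 * sum_n (fun n => Rpower (INR (S n)) (-(q+1))) N)).
 { induction N. rewrite !sum_O, HE; auto. rewrite !sum_SnR', IHN, HE. ring. }
 rewrite HE2. pose proof (pseries_bound q Hq M). pose proof (Rpower_pos (INR (S M)) (-q)).
 unfold ZW; fold q. assert ((1 - Rpower (INR (S M)) (- q)) / q <= 1/q).
 { unfold Rdiv. apply Rmult_le_compat_r; [left; apply Rinv_0_lt_compat; lra| lra]. }
 lra.
Qed.

Definition Nn r u := Series (zterm (fun j => (af r u j)^2)).
Definition HA r u := ex_series (zterm (fun j => (af r u j)^2)).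

Lemma af2_nonneg r u j : 0 <= (af r u j)^2.
Proof. apply pow2_ge_0. Qed.
Lemma af2_0 r u : (af r u 0%Z)^2 = 0.
Proof. rewrite af_0. ring. Qed.

Lemma Taf r u N : HA r u -> Tz N (fun j => (af r u j)^2) <= Nn r u.
Proof. intros H. apply T_le_Series; auto using af2_nonneg, af2_0. Qed.

Lemma Nn_nonneg r u : HA r u -> 0 <= Nn r u.
Proof. intros H. transitivity (Tz 0 (fun j => (af r u j)^2)); [|apply Taf; auto].
 apply T_nonneg; intros; apply af2_nonneg. Qed.

Lemma X_bound r u : 1/2 < r -> HA r u ->
  ex_series (zterm (Xf u)) /\ (Series (zterm (Xf u)))^2 <= Nn r u * ZW r.
Proof. intros Hr H. apply ex_from_T2; [apply Xf_nonneg| apply Xf_0|].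
 intros N. unfold Tz. rewrite (zs_ext (Xf u) (fun j => af r u j * pw (-r) j)) by (intros; apply Xf_aw).
 eapply Rle_trans; [apply cs_std|]. fold (Tz N (fun j => (af r u j)^2)). fold (Tz N (fun j => (pw (-r) j)^2)).
 apply Rmult_le_compat; [apply T_nonneg; intros; apply pow2_ge_0|apply T_nonneg; intros; apply pow2_ge_0|apply Taf; auto|apply Tw2; auto].
Qed.

Lemma pwm_le1 r j : 0 < r -> pw (-r) j <= 1.
Proof. intros Hr. unfold pw. destruct (Z.eqb_spec j 0); [lra|].
 rewrite <- (Rpower_O (absZ j)) by (apply absZ_pos; auto).
 apply Rle_Rpower; [unfold absZ; apply IZR_le; lia|lra]. Qed.

Lemma Y_pt r v j : 0 < r -> HA r v -> Xf v j <= 1 + Nn r v.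
Proof. intros Hr H. rewrite (Xf_aw r). pose proof (pwm_le1 r j Hr). pose proof (af_nonneg r v j).
 pose proof (pw_nonneg (-r) j).
 assert (H3 : (af r v j)^2 <= Nn r v).
 { transitivity (zs (fun j => (af r v j)^2) j 1); [simpl; lra|]. apply zs_le_Series; auto using af2_nonneg, af2_0. }
 nra. Qed.

Lemma conv_ex r u v k : 1/2 < r -> HA r u -> HA r v ->
  ex_series (zterm (fun j => Xf u j * Xf v (k - j)%Z)).
Proof. intros Hr Hu Hv. destruct (X_bound r u Hr Hu) as [HX _].
 apply (ex_from_T _ ((1 + Nn r v) * Series (zterm (Xf u)))).
 - intros; apply Rmult_le_pos; apply Xf_nonneg.
 - rewrite Xf_0; ring.
 - intros N. transitivity (Tz N (fun j => (1 + Nn r v) * Xf u j)).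
   + apply zs_le. intros j. pose proof (Y_pt r v (k - j) ltac:(lra) Hv). pose proof (Xf_nonneg u j). nra.
   + unfold Tz; rewrite zs_scal; fold (Tz N (Xf u)). apply Rmult_le_compat_l.
     * pose proof (Nn_nonneg r v Hv); lra.
     * apply T_le_Series; auto using Xf_nonneg, Xf_0.
Qed.

Lemma Tz_scal c f N : Tz N (fun i => c * f i) = c * Tz N f.
Proof. apply zs_scal. Qed.
Lemma Tz_plus f g N : Tz N (fun i => f i + g i) = Tz N f + Tz N g.
Proof. apply zs_plus. Qed.
Lemma Tz_le f g N : (forall i, f i <= g i) -> Tz N f <= Tz N g.
Proof. apply zs_le. Qed.
Lemma Tz_ext f g N : (forall i, f i = g i) -> Tz N f = Tz N g.
Proof. apply zs_ext. Qed.

Lemma SX_nonneg u : ex_series (zterm (Xf u)) -> 0 <= Series (zterm (Xf u)).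
Proof. intros H. transitivity (Tz 0 (Xf u)); [apply T_nonneg, Xf_nonneg| apply T_le_Series; auto using Xf_nonneg, Xf_0]. Qed.

Lemma fin_bound r u v N M : 1/2 < r -> HA r u -> HA r v ->
  Tz N (fun k => (pw r k * Tz M (fun j => Xf u j * Xf v (k - j)%Z))^2)
  <= 4 * (Rpower 2 r)^2 * ZW r * Nn r u * Nn r v.
Proof. intros Hr Hu Hv.
 destruct (X_bound r u Hr Hu) as [HXu HSu]. destruct (X_bound r v Hr Hv) as [HXv HSv].
 set (SX := Series (zterm (Xf u))) in *. set (SY := Series (zterm (Xf v))) in *.
 pose proof (SX_nonneg u HXu) as HSX. pose proof (SX_nonneg v HXv) as HSY. fold SX SY in HSX, HSY.
 pose proof (Nn_nonneg r u Hu). pose proof (Nn_nonneg r v Hv).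
 set (A := Rpower 2 r). assert (HA0 : 0 < A) by apply Rpower_pos.
 set (D := fun k => Tz M (fun j => af r u j * Xf v (k - j)%Z)).
 set (E := fun k => Tz M (fun j => Xf u j * af r v (k - j)%Z)).
 assert (HD0 : forall k, 0 <= D k) by (intros; apply T_nonneg; intros; apply Rmult_le_pos; auto using af_nonneg, Xf_nonneg).
 assert (HE0 : forall k, 0 <= E k) by (intros; apply T_nonneg; intros; apply Rmult_le_pos; auto using af_nonneg, Xf_nonneg).
 assert (S1 : forall k, (pw r k * Tz M (fun j => Xf u j * Xf v (k - j)%Z))^2 <= 2 * A^2 * (D k ^2 + E k ^2)).
 { intros k. destruct (Z.eqb_spec k 0) as [Ek|Ek].
   - subst k. rewrite pw_0. pose proof (pow2_ge_0 (D 0%Z)). pose proof (pow2_ge_0 (E 0%Z)).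
     assert (0 <= A^2) by apply pow2_ge_0. simpl. nra.
   - assert (H1 : pw r k * Tz M (fun j => Xf u j * Xf v (k - j)%Z) <= A * (D k + E k)).
     { rewrite <- Tz_scal. unfold D, E. rewrite <- Tz_plus, <- Tz_scal. apply Tz_le. intros j.
       apply pw_ineq; auto; lra. }
     assert (H2 : 0 <= pw r k * Tz M (fun j => Xf u j * Xf v (k - j)%Z)).
     { apply Rmult_le_pos; [apply pw_nonneg| apply T_nonneg; intros; apply Rmult_le_pos; apply Xf_nonneg]. }
     pose proof (HD0 k). pose proof (HE0 k).
     assert ((pw r k * Tz M (fun j => Xf u j * Xf v (k - j)%Z))^2 <= (A * (D k + E k))^2) by (apply pow_incr; auto).
     assert ((A * (D k + E k))^2 <= 2 * A^2 * (D k ^2 + E k ^2)).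
     { assert (0 <= (D k - E k)^2) by apply pow2_ge_0. assert (0 <= A^2) by apply pow2_ge_0. simpl in *. nra. }
     lra. }
 assert (S2 : Tz N (fun k => D k ^2) <= SY^2 * Nn r u).
 { transitivity (Tz N (fun k => SY * Tz M (fun j => Xf v (k - j)%Z * (af r u j)^2))).
   - apply Tz_le. intros k. unfold D.
     eapply Rle_trans; [apply (cs_weighted (af r u) (fun j => Xf v (k - j)%Z)); intros; apply Xf_nonneg|].
     fold (Tz M (fun j => Xf v (k - j)%Z * (af r u j)^2)). fold (Tz M (fun j => Xf v (k - j)%Z)).
     rewrite Rmult_comm. apply Rmult_le_compat_r.
     + apply T_nonneg; intros; apply Rmult_le_pos; [apply Xf_nonneg|apply pow2_ge_0].
     + apply T_rev_le; auto using Xf_nonneg, Xf_0.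
   - rewrite Tz_scal, T_swap.
     transitivity (SY * Tz M (fun j => SY * (af r u j)^2)).
     + apply Rmult_le_compat_l; auto. apply Tz_le. intros j.
       rewrite (Tz_ext _ (fun k => (af r u j)^2 * Xf v (k - j)%Z)) by (intros; ring).
       rewrite Tz_scal, Rmult_comm. apply Rmult_le_compat_r; [apply pow2_ge_0|].
       apply T_shift_le; auto using Xf_nonneg, Xf_0.
     + rewrite Tz_scal. pose proof (Taf r u M Hu).
       transitivity (SY * (SY * Nn r u)); [apply Rmult_le_compat_l; auto; apply Rmult_le_compat_l; auto| right; simpl; ring]. }
 assert (S3 : Tz N (fun k => E k ^2) <= SX^2 * Nn r v).
 { transitivity (Tz N (fun k => SX * Tz M (fun j => Xf u j * (af r v (k - j)%Z)^2))).
   - apply Tz_le. intros k. unfold E.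
     rewrite (Tz_ext (fun j => Xf u j * af r v (k - j)%Z) (fun j => af r v (k - j)%Z * Xf u j)) by (intros; ring).
     eapply Rle_trans; [apply (cs_weighted (fun j => af r v (k - j)%Z) (Xf u)); intros; apply Xf_nonneg|].
     fold (Tz M (fun j => Xf u j * (af r v (k - j)%Z)^2)). fold (Tz M (Xf u)).
     rewrite Rmult_comm. apply Rmult_le_compat_r.
     + apply T_nonneg; intros; apply Rmult_le_pos; [apply Xf_nonneg|apply pow2_ge_0].
     + apply T_le_Series; auto using Xf_nonneg, Xf_0.
   - rewrite Tz_scal, T_swap.
     transitivity (SX * Tz M (fun j => Nn r v * Xf u j)).
     + apply Rmult_le_compat_l; auto. apply Tz_le. intros j.
       rewrite Tz_scal, Rmult_comm. apply Rmult_le_compat_r; [apply Xf_nonneg|].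
       apply (T_shift_le (fun i => (af r v i)^2)); auto using af2_nonneg, af2_0.
     + rewrite Tz_scal. pose proof (T_le_Series (Xf u) M (Xf_nonneg u) (Xf_0 u) HXu). fold SX in H1.
       transitivity (SX * (Nn r v * SX)); [apply Rmult_le_compat_l; auto; apply Rmult_le_compat_l; auto| right; simpl; ring]. }
 transitivity (Tz N (fun k => 2 * A^2 * (D k ^2 + E k ^2))); [apply Tz_le; auto|].
 rewrite Tz_scal, Tz_plus.
 assert (0 <= A^2) by apply pow2_ge_0.
 assert (T1 : SY^2 * Nn r u <= (Nn r v * ZW r) * Nn r u) by (apply Rmult_le_compat_r; auto).
 assert (T2 : SX^2 * Nn r v <= (Nn r u * ZW r) * Nn r v) by (apply Rmult_le_compat_r; auto).
 transitivity (2 * A^2 * (2 * (ZW r * Nn r u * Nn r v))).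
 - apply Rmult_le_compat_l; [lra|]. 
   assert (Nn r v * ZW r * Nn r u = ZW r * Nn r u * Nn r v) by ring.
   assert (Nn r u * ZW r * Nn r v = ZW r * Nn r u * Nn r v) by ring. lra.
 - right. unfold A. ring.
Qed.

Lemma im_le_Cmod c : Rabs (Im c) <= Cmod c.
Proof. eapply Rle_trans; [apply Rmax_r|apply Rmax_Cmod]. Qed.

Lemma Cmod_le_sum c : Cmod c <= Rabs (Re c) + Rabs (Im c).
Proof. unfold Cmod. rewrite <- (sqrt_pow2 (Rabs (Re c) + Rabs (Im c))) by (pose proof (Rabs_pos (Re c)); pose proof (Rabs_pos (Im c)); lra).
 apply sqrt_le_1_alt. unfold Re, Im. pose proof (Rabs_pos (fst c)); pose proof (Rabs_pos (snd c)).
 rewrite <- (pow2_abs (fst c)), <- (pow2_abs (snd c)). simpl. nra. Qed.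

Lemma ser_abs_le (a b : nat -> R) : (forall n, Rabs (a n) <= b n) -> ex_series b -> Rabs (Series a) <= Series b.
Proof. intros H Hb.
 assert (Ha : ex_series (fun n => Rabs (a n))).
 { apply (@ex_series_le R_AbsRing R_CompleteNormedModule _ b); auto. intros n. change (norm (Rabs (a n))) with (Rabs (Rabs (a n))). rewrite Rabs_Rabsolu. auto. }
 eapply Rle_trans; [apply Series_Rabs; auto|]. apply Series_le; auto. intros n; split; [apply Rabs_pos|auto]. Qed.

Theorem main_thm (s : R) (hs : -1/2 < s) :
  exists c2 : R, 0 <= c2 /\
  forall (t : R) (u v : Z -> C),
    in_Hs s u -> in_Hs s v ->
    (forall k : Z, ex_series (zterm (fun k1 => Cmod (B2_term t u v k k1)))) /\
    in_Hs (s + 1) (B2 t u v) /\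
    Hs_norm (s + 1) (B2 t u v) <= c2 * Hs_norm s u * Hs_norm s v.
Proof.
 assert (Hr : 1/2 < s + 1) by lra.
 set (K := 16 * (Rpower 2 (s+1))^2 * ZW (s+1)).
 exists (sqrt K). split; [apply sqrt_pos|].
 intros t u v Hu Hv.
 assert (HAu : HA (s+1) u) by (eapply ex_series_ext; [apply zterm_weight|exact Hu]).
 assert (HAv : HA (s+1) v) by (eapply ex_series_ext; [apply zterm_weight|exact Hv]).
 assert (Nu : Series (zterm (Hs_weight s u)) = Nn (s+1) u) by (apply Series_ext; apply zterm_weight).
 assert (Nv : Series (zterm (Hs_weight s v)) = Nn (s+1) v) by (apply Series_ext; apply zterm_weight).
 pose proof (Nn_nonneg _ _ HAu) as Nu0. pose proof (Nn_nonneg _ _ HAv) as Nv0.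
 set (r := s + 1) in *.
 set (g := fun k j => Xf u j * Xf v (k - j)%Z).
 assert (Hg : forall k, ex_series (zterm (g k))) by (intros; apply (conv_ex r); auto).
 assert (Hterm : forall k n, zterm (fun k1 => Cmod (B2_term t u v k k1)) n = zterm (g k) n).
 { intros. rewrite !zterm_R, !term_cmod. reflexivity. }
 split.
 { intros k. eapply ex_series_ext; [intros n; symmetry; apply Hterm| apply Hg]. }
 set (C := fun k => Series (zterm (g k))).
 assert (HB : forall k, Cmod (B2 t u v k) <= 2 * C k).
 { intros k. eapply Rle_trans; [apply Cmod_le_sum|]. unfold B2, Re, Im; cbn [fst snd].
   assert (forall n, Rabs (zterm (fun k1 => fst (B2_term t u v k k1)) n) <= zterm (g k) n).
   { intros n. rewrite !zterm_R. eapply Rle_trans; [apply Rabs_triang|].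
     pose proof (re_le_Cmod (B2_term t u v k (Z.of_nat (S n)))). pose proof (re_le_Cmod (B2_term t u v k (- Z.of_nat (S n))%Z)).
     rewrite term_cmod in *. unfold Re in *. unfold g. lra. }
   assert (forall n, Rabs (zterm (fun k1 => snd (B2_term t u v k k1)) n) <= zterm (g k) n).
   { intros n. rewrite !zterm_R. eapply Rle_trans; [apply Rabs_triang|].
     pose proof (im_le_Cmod (B2_term t u v k (Z.of_nat (S n)))). pose proof (im_le_Cmod (B2_term t u v k (- Z.of_nat (S n))%Z)).
     rewrite term_cmod in *. unfold Im in *. unfold g. lra. }
   pose proof (ser_abs_le _ _ H (Hg k)). pose proof (ser_abs_le _ _ H0 (Hg k)). unfold C. lra. }
 set (h := fun k => if Z.eqb k 0 then 0 else Hs_weight r (B2 t u v) k).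
 assert (Hh : forall n, zterm h n = zterm (Hs_weight r (B2 t u v)) n).
 { intros n. rewrite !zterm_R. unfold h.
   destruct (Z.eqb_spec (Z.of_nat (S n)) 0); [lia|]. destruct (Z.eqb_spec (- Z.of_nat (S n))%Z 0); [lia|]. reflexivity. }
 assert (Hh0 : forall k, 0 <= h k).
 { intros k. unfold h. destruct (Z.eqb k 0); [lra|]. unfold Hs_weight. apply Rmult_le_pos; [left; apply Rpower_pos|apply pow2_ge_0]. }
 assert (Hhk : forall k, h k <= 4 * (pw r k * C k)^2).
 { intros k. unfold h, pw. destruct (Z.eqb_spec k 0); [pose proof (pow2_ge_0 (0 * C k)); lra|].
   unfold Hs_weight. fold (absZ k). replace (2 * r) with (r + r) by ring. rewrite Rpower_plus.
   assert (Cmod (B2 t u v k) ^ 2 <= (2 * C k)^2) by (apply pow_incr; split; [apply Cmod_ge_0|apply HB]).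
   pose proof (Rpower_pos (absZ k) r). simpl in *. nra. }
 assert (Hlim : forall N, Tz N (fun k => (pw r k * C k)^2) <= 4 * (Rpower 2 r)^2 * ZW r * Nn r u * Nn r v).
 { intros N.
   assert (L : is_lim_seq (fun M => Tz N (fun k => (pw r k * Tz (S M) (g k)) * (pw r k * Tz (S M) (g k))))
                (Tz N (fun k => (pw r k * C k) * (pw r k * C k)))).
   { apply (zs_lim (fun M k => (pw r k * Tz (S M) (g k)) * (pw r k * Tz (S M) (g k))) (fun k => (pw r k * C k) * (pw r k * C k))).
     intros k. assert (L1 : is_lim_seq (fun M => pw r k * Tz (S M) (g k)) (pw r k * C k)).
     { apply is_lim_seq_mult'; [apply is_lim_seq_const|]. apply lim_T; auto. unfold g; rewrite Xf_0; ring. }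
     apply is_lim_seq_mult'; auto. }
   assert (Hb : forall M, Tz N (fun k => (pw r k * Tz (S M) (g k)) * (pw r k * Tz (S M) (g k))) <= 4 * (Rpower 2 r)^2 * ZW r * Nn r u * Nn r v).
   { intros M. pose proof (fin_bound r u v N (S M) Hr HAu HAv).
     rewrite (Tz_ext _ (fun k => (pw r k * Tz (S M) (g k)) ^ 2)) by (intros; simpl; ring). exact H. }
   pose proof (is_lim_seq_le _ _ _ _ Hb L (is_lim_seq_const _)). simpl in H.
   rewrite (Tz_ext _ (fun k => (pw r k * C k) * (pw r k * C k))) by (intros; simpl; ring). exact H. }
 destruct (ex_from_T h (K * Nn r u * Nn r v) Hh0) as [Hex HS].
 { unfold h. simpl. reflexivity. }
 { intros N. transitivity (Tz N (fun k => 4 * (pw r k * C k)^2)); [apply Tz_le; auto|].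
   rewrite Tz_scal. specialize (Hlim N). unfold K. fold r. lra. }
 split.
 { eapply ex_series_ext; [apply Hh|exact Hex]. }
 unfold Hs_norm. rewrite Nu, Nv. fold r.
 rewrite <- (Series_ext _ _ Hh).
 assert (0 <= K) by (unfold K, ZW, r; assert (0 < 1 / (2 * (s+1) - 1)) by (apply Rdiv_lt_0_compat; lra); pose proof (pow2_ge_0 (Rpower 2 (s+1))); nra).
 assert (0 <= K * Nn r u) by (apply Rmult_le_pos; auto). rewrite <- (sqrt_mult_alt K) by auto. rewrite <- (sqrt_mult_alt (K * Nn r u)) by auto.
 apply sqrt_le_1_alt. exact HS.
Qed.

Theorem lemma7p2 (s : R) (hs : -1/2 < s) :
  exists c2 : R, 0 <= c2 /\
  forall (t : R) (u v : Z -> C),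
    in_Hs s u -> in_Hs s v ->
    (forall k : Z, ex_series (zterm (fun k1 => Cmod (B2_term t u v k k1)))) /\
    in_Hs (s + 1) (B2 t u v) /\
    Hs_norm (s + 1) (B2 t u v) <= c2 * Hs_norm s u * Hs_norm s v.
Proof. exact (main_thm s hs). Qed.
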